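(* Let $\Gamma=\mathsf{PSL}_2(\mathbb{Z})=\langle U,S\mid U^3,S^2\rangle$, with $U$ of order $3$ and $S$ of order $2$. For $n,m\ge0$ let $q(n,m)$ be the number of words in $\{U,S\}$ with exactly $n$ letters $U$ and $m$ letters $S$ that equal the identity in $\Gamma$, and let $\hat q(n,m)$ be the number of such words which in addition do not contain two consecutive letters $S$ (i.e. do not contain the factor $SS$). Set $\hat q(n,m)=0$ if an argument is negative. Then for all $n,m\ge 0$, $$q(3n,2m)=\sum_{k\ge0}\hat q(3n,2m-2k)\binom{3n+k}{k}.$$ Consequently, with $Q(x,y)=\sum_{n,m\ge0}q(n,m)x^ny^m$ and $\widehat Q(x,y)=\sum_{n,m\ge0}\hat q(3n,2m)x^{3n}y^{2m}$, $$Q(x,y)=\widehat{Q}\Big(\frac{x}{1-y^2},y\Big)\cdot\frac{1}{1-y^2}.$$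
   Context: Words are finite sequences over the alphabet $\{U,S\}$ read as products in $\Gamma$; the empty word counts as a word equal to the identity. Note $q(n,m)=\hat q(n,m)=0$ unless $3\mid n$ and $2\mid m$. *)

(* Defs.v *)
From HB Require Import structures.
From mathcomp Require Import all_boot all_order all_algebra.
Set Implicit Arguments. Unset Strict Implicit. Unset Printing Implicit Defensive.
Import Order.TTheory GRing.Theory Num.Theory.
Local Open Scope ring_scope.

(* Letters: [true] stands for U, [false] stands for S.
   A word is a sequence of letters, read as a product (left to right). *)
Definition letterU : bool := true.
Definition letterS : bool := false.

(* Gamma = PSL_2(Z), realised as SL_2(Z) modulo {I, -I}.
   S = [[0,-1],[1,0]] (order 2 in PSL_2(Z)),
   U = [[0,-1],[1,1]] (order 3 in PSL_2(Z)); they generate PSL_2(Z)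
   with presentation <U,S | U^3, S^2>. *)
Definition S_mx : 'M[int]_2 :=
  \matrix_(i < 2, j < 2)
    (if (i == 0 :> nat) && (j == 1 :> nat) then -1
     else if (i == 1 :> nat) && (j == 0 :> nat) then 1 else 0).
Definition U_mx : 'M[int]_2 :=
  \matrix_(i < 2, j < 2)
    (if (i == 0 :> nat) && (j == 0 :> nat) then 0
     else if (i == 0 :> nat) && (j == 1 :> nat) then -1 else 1).

Definition letter_mx (l : bool) : 'M[int]_2 := if l then U_mx else S_mx.

Definition word_mx (w : seq bool) : 'M[int]_2 :=
  foldr (fun l M => letter_mx l *m M) 1%:M w.

Definition is_trivial (w : seq bool) : bool :=
  (word_mx w == 1%:M) || (word_mx w == - 1%:M).

Definition nbU (w : seq bool) : nat := count (fun l => l == letterU) w.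
Definition nbS (w : seq bool) : nat := count (fun l => l == letterS) w.

Definition noSS (w : seq bool) : bool := ~~ infix [:: letterS; letterS] w.

Definition q (n m : nat) : nat :=
  #|[set t : (n + m)%N.-tuple bool |
      [&& nbU t == n, nbS t == m & is_trivial t]]|.

Definition qhat (n m : nat) : nat :=
  #|[set t : (n + m)%N.-tuple bool |
      [&& nbU t == n, nbS t == m, is_trivial t & noSS t]]|.

(* univariate series in y: coefficient functions nat -> int *)
Definition smul (a b : nat -> int) : nat -> int :=
  fun k => \sum_(i < k.+1) a i * b (k - i)%N.
Definition sone : nat -> int := fun k => if k == 0%N then 1 else 0.
Definition spow (a : nat -> int) (n : nat) : nat -> int := iter n (smul a) sone.
Definition one_minus_y2 : nat -> int :=
  fun k => if k == 0%N then 1 else if k == 2%N then -1 else 0.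

(* bivariate series in x, y: F a b = coefficient of x^a y^b *)
Definition Qser : nat -> nat -> int := fun a b => (q a b)%:Z.
Definition Qhatser : nat -> nat -> int :=
  fun a b => if (3 %| a)%N && (2 %| b)%N then (qhat a b)%:Z else 0.

(* F(x * J(y), y) * J(y) for a bivariate series F and univariate J:
   the coefficient of x^a is (sum_m F a m y^m) * J^a * J. *)
Definition subst_mul (F : nat -> nat -> int) (J : nat -> int) :
  nat -> nat -> int :=
  fun a b => smul (smul (F a) (spow J a)) J b.

(* Main.v *)
Require Import Defs.
From mathcomp Require Import all_boot all_order all_algebra.
From mathcomp Require Import ring zify.
From Stdlib Require Import FunctionalExtensionality.
Import GRing.Theory.
Local Open Scope ring_scope.

Definition reach : seq (int*int*int*int*nat*nat) := [:: (Posz 0,Posz 1,Posz 5,Posz 0,0%N,1%N); (Posz 0,Posz 1,Posz 5,Posz 1,2%N,0%N); (Posz 0,Posz 1,Posz 5,Posz 2,1%N,1%N); (Posz 0,Posz 1,Posz 5,Posz 3,0%N,0%N); (Posz 0,Posz 1,Posz 5,Posz 4,2%N,1%N); (Posz 0,Posz 1,Posz 5,Posz 5,1%N,0%N); (Posz 0,Posz 5,Posz 1,Posz 0,0%N,1%N); (Posz 0,Posz 5,Posz 1,Posz 1,1%N,0%N); (Posz 0,Posz 5,Posz 1,Posz 2,2%N,1%N); (Posz 0,Posz 5,Posz 1,Posz 3,0%N,0%N); (Posz 0,Posz 5,Posz 1,Posz 4,1%N,1%N); (Posz 0,Posz 5,Posz 1,Posz 5,2%N,0%N); (Posz 1,Posz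 0,Posz 0,Posz 1,0%N,0%N); (Posz 1,Posz 0,Posz 1,Posz 1,2%N,1%N); (Posz 1,Posz 0,Posz 2,Posz 1,1%N,0%N); (Posz 1,Posz 0,Posz 3,Posz 1,0%N,1%N); (Posz 1,Posz 0,Posz 4,Posz 1,2%N,0%N); (Posz 1,Posz 0,Posz 5,Posz 1,1%N,1%N); (Posz 1,Posz 1,Posz 0,Posz 1,1%N,1%N); (Posz 1,Posz 1,Posz 1,Posz 2,0%N,0%N); (Posz 1,Posz 1,Posz 2,Posz 3,2%N,1%N); (Posz 1,Posz 1,Posz 3,Posz 4,1%N,0%N); (Posz 1,Posz 1,Posz 4,Posz 5,0%N,1%N); (Posz 1,Posz 1,Posz 5,Posz 0,2%N,0%N); (Posz 1,Posz 2,Posz 0,Posz 1,2%N,0%N); (Posz 1,Posz 2,Posz 1,Posz 3,1%N,1%N); (Posz 1,Posz 2,Posz 2,Posz 5,0%N,0%N); (Posz 1,Posz 2,Posz 3,Posz 1,2%N,1%N); (Posz 1,Posz 2,Posz 4,Posz 3,1%N,0%N); (Posz 1,Posz 2,Posz 5,Posz 5,0%N,1%N); (Posz 1,Posz 3,Posz 0,Posz 1,0%N,1%N); (Posz 1,Posz 3,Posz 1,Posz 4,2%N,0%N); (Posz 1,Posz 3,Posz 2,Posz 1,1%N,1%N); (Posz 1,Posz 3,Posz 3,Posz 4,0%N,0%N); (Posz 1,Posz 3,Posz 4,Posz 1,2%N,1%N); (Posz 1,Posz 3,Posz 5,Posz 4,1%N,0%N); (Posz 1,Posz 4,Posz 0,Posz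 1,1%N,0%N); (Posz 1,Posz 4,Posz 1,Posz 5,0%N,1%N); (Posz 1,Posz 4,Posz 2,Posz 3,2%N,0%N); (Posz 1,Posz 4,Posz 3,Posz 1,1%N,1%N); (Posz 1,Posz 4,Posz 4,Posz 5,0%N,0%N); (Posz 1,Posz 4,Posz 5,Posz 3,2%N,1%N); (Posz 1,Posz 5,Posz 0,Posz 1,2%N,1%N); (Posz 1,Posz 5,Posz 1,Posz 0,1%N,0%N); (Posz 1,Posz 5,Posz 2,Posz 5,0%N,1%N); (Posz 1,Posz 5,Posz 3,Posz 4,2%N,0%N); (Posz 1,Posz 5,Posz 4,Posz 3,1%N,1%N); (Posz 1,Posz 5,Posz 5,Posz 2,0%N,0%N); (Posz 2,Posz 1,Posz 1,Posz 1,0%N,0%N); (Posz 2,Posz 1,Posz 1,Posz 4,0%N,1%N); (Posz 2,Posz 1,Posz 3,Posz 2,2%N,1%N); (Posz 2,Posz 1,Posz 3,Posz 5,2%N,0%N); (Posz 2,Posz 1,Posz 5,Posz 0,1%N,1%N); (Posz 2,Posz 1,Posz 5,Posz 3,1%N,0%N); (Posz 2,Posz 3,Posz 1,Posz 2,1%N,1%N); (Posz 2,Posz 3,Posz 1,Posz 5,1%N,0%N); (Posz 2,Posz 3,Posz 3,Posz 2,0%N,1%N); (Posz 2,Posz 3,Posz 3,Posz 5,0%N,0%N); (Posz 2,Posz 3,Posz 5,Posz 2,2%N,1%N); (Posz 2,Posz 3,Posz 5,Posz 5,2%N,0%N); (Posz 2,Posz 5,Posz 1,Posz 0,2%N,1%N);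 (Posz 2,Posz 5,Posz 1,Posz 3,2%N,0%N); (Posz 2,Posz 5,Posz 3,Posz 2,1%N,1%N); (Posz 2,Posz 5,Posz 3,Posz 5,1%N,0%N); (Posz 2,Posz 5,Posz 5,Posz 1,0%N,0%N); (Posz 2,Posz 5,Posz 5,Posz 4,0%N,1%N); (Posz 3,Posz 1,Posz 2,Posz 1,2%N,1%N); (Posz 3,Posz 1,Posz 2,Posz 3,0%N,1%N); (Posz 3,Posz 1,Posz 2,Posz 5,1%N,1%N); (Posz 3,Posz 1,Posz 5,Posz 0,0%N,0%N); (Posz 3,Posz 1,Posz 5,Posz 2,1%N,0%N); (Posz 3,Posz 1,Posz 5,Posz 4,2%N,0%N); (Posz 3,Posz 2,Posz 1,Posz 1,1%N,1%N); (Posz 3,Posz 2,Posz 1,Posz 3,0%N,1%N); (Posz 3,Posz 2,Posz 1,Posz 5,2%N,1%N); (Posz 3,Posz 2,Posz 4,Posz 1,1%N,0%N); (Posz 3,Posz 2,Posz 4,Posz 3,0%N,0%N); (Posz 3,Posz 2,Posz 4,Posz 5,2%N,0%N); (Posz 3,Posz 4,Posz 2,Posz 1,2%N,0%N); (Posz 3,Posz 4,Posz 2,Posz 3,0%N,0%N); (Posz 3,Posz 4,Posz 2,Posz 5,1%N,0%N); (Posz 3,Posz 4,Posz 5,Posz 1,2%N,1%N); (Posz 3,Posz 4,Posz 5,Posz 3,0%N,1%N); (Posz 3,Posz 4,Posz 5,Posz 5,1%N,1%N); (Posz 3,Posz 5,Posz 1,Posz 0,0%N,0%N); (Posz 3,Posz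 5,Posz 1,Posz 2,2%N,0%N); (Posz 3,Posz 5,Posz 1,Posz 4,1%N,0%N); (Posz 3,Posz 5,Posz 4,Posz 1,1%N,1%N); (Posz 3,Posz 5,Posz 4,Posz 3,0%N,1%N); (Posz 3,Posz 5,Posz 4,Posz 5,2%N,1%N); (Posz 4,Posz 1,Posz 1,Posz 2,0%N,1%N); (Posz 4,Posz 1,Posz 1,Posz 5,0%N,0%N); (Posz 4,Posz 1,Posz 3,Posz 1,1%N,0%N); (Posz 4,Posz 1,Posz 3,Posz 4,1%N,1%N); (Posz 4,Posz 1,Posz 5,Posz 0,2%N,1%N); (Posz 4,Posz 1,Posz 5,Posz 3,2%N,0%N); (Posz 4,Posz 3,Posz 1,Posz 1,2%N,0%N); (Posz 4,Posz 3,Posz 1,Posz 4,2%N,1%N); (Posz 4,Posz 3,Posz 3,Posz 1,0%N,0%N); (Posz 4,Posz 3,Posz 3,Posz 4,0%N,1%N); (Posz 4,Posz 3,Posz 5,Posz 1,1%N,0%N); (Posz 4,Posz 3,Posz 5,Posz 4,1%N,1%N); (Posz 4,Posz 5,Posz 1,Posz 0,1%N,1%N); (Posz 4,Posz 5,Posz 1,Posz 3,1%N,0%N); (Posz 4,Posz 5,Posz 3,Posz 1,2%N,0%N); (Posz 4,Posz 5,Posz 3,Posz 4,2%N,1%N); (Posz 4,Posz 5,Posz 5,Posz 2,0%N,1%N); (Posz 4,Posz 5,Posz 5,Posz 5,0%N,0%N); (Posz 5,Posz 0,Posz 0,Posz 5,0%N,0%N); (Posz 5,Posz 0,Posz 1,Posz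 5,1%N,1%N); (Posz 5,Posz 0,Posz 2,Posz 5,2%N,0%N); (Posz 5,Posz 0,Posz 3,Posz 5,0%N,1%N); (Posz 5,Posz 0,Posz 4,Posz 5,1%N,0%N); (Posz 5,Posz 0,Posz 5,Posz 5,2%N,1%N); (Posz 5,Posz 1,Posz 0,Posz 5,2%N,1%N); (Posz 5,Posz 1,Posz 1,Posz 4,0%N,0%N); (Posz 5,Posz 1,Posz 2,Posz 3,1%N,1%N); (Posz 5,Posz 1,Posz 3,Posz 2,2%N,0%N); (Posz 5,Posz 1,Posz 4,Posz 1,0%N,1%N); (Posz 5,Posz 1,Posz 5,Posz 0,1%N,0%N); (Posz 5,Posz 2,Posz 0,Posz 5,1%N,0%N); (Posz 5,Posz 2,Posz 1,Posz 3,2%N,1%N); (Posz 5,Posz 2,Posz 2,Posz 1,0%N,0%N); (Posz 5,Posz 2,Posz 3,Posz 5,1%N,1%N); (Posz 5,Posz 2,Posz 4,Posz 3,2%N,0%N); (Posz 5,Posz 2,Posz 5,Posz 1,0%N,1%N); (Posz 5,Posz 3,Posz 0,Posz 5,0%N,1%N); (Posz 5,Posz 3,Posz 1,Posz 2,1%N,0%N); (Posz 5,Posz 3,Posz 2,Posz 5,2%N,1%N); (Posz 5,Posz 3,Posz 3,Posz 2,0%N,0%N); (Posz 5,Posz 3,Posz 4,Posz 5,1%N,1%N); (Posz 5,Posz 3,Posz 5,Posz 2,2%N,0%N); (Posz 5,Posz 4,Posz 0,Posz 5,2%N,0%N); (Posz 5,Posz 4,Posz 1,Posz 1,0%N,1%N);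 (Posz 5,Posz 4,Posz 2,Posz 3,1%N,0%N); (Posz 5,Posz 4,Posz 3,Posz 5,2%N,1%N); (Posz 5,Posz 4,Posz 4,Posz 1,0%N,0%N); (Posz 5,Posz 4,Posz 5,Posz 3,1%N,1%N); (Posz 5,Posz 5,Posz 0,Posz 5,1%N,1%N); (Posz 5,Posz 5,Posz 1,Posz 0,2%N,0%N); (Posz 5,Posz 5,Posz 2,Posz 1,0%N,1%N); (Posz 5,Posz 5,Posz 3,Posz 2,1%N,0%N); (Posz 5,Posz 5,Posz 4,Posz 3,2%N,1%N); (Posz 5,Posz 5,Posz 5,Posz 4,0%N,0%N)].
Definition updU (x : int*int*int*int) : int*int*int*int :=
  let: (a,b,c,d) := x in ((- c) %% 6, (- d) %% 6, (a + c) %% 6, (b + d) %% 6)%Z.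
Definition updS (x : int*int*int*int) : int*int*int*int :=
  let: (a,b,c,d) := x in ((- c) %% 6, (- d) %% 6, a, b)%Z.
Definition upd6 (x : int*int*int*int*nat*nat) (l : bool) :=
  let: (s,i,j) := x in
  if l then (updU s, ((i + 1) %% 3)%N, j) else (updS s, i, ((j + 1) %% 2)%N).
Lemma reach_closed : all (fun x => (upd6 x true \in reach) && (upd6 x false \in reach)) reach.
Proof. by vm_compute. Qed.
Lemma reach_id : all (fun x : int*int*int*int*nat*nat => let: (s,i,j) := x in
   ((s == (Posz 1, Posz 0, Posz 0, Posz 1)) || (s == (Posz 5, Posz 0, Posz 0, Posz 5))) ==> ((i == 0%N) && (j == 0%N))) reach.
Proof. by vm_compute. Qed.
Lemma o0 : widen_ord (m:=2) (leqnSn 1) ord_max = 0. Proof. exact: val_inj. Qed.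
Lemma o1 : ord_max = 1 :> 'I_2. Proof. exact: val_inj. Qed.

Lemma mulU_E (M : 'M[int]_2) i j :
  (U_mx *m M) i j = if i == 0 then - M 1 j else M 0 j + M 1 j.
Proof.
rewrite !mxE big_ord_recr big_ord_recr big_ord0 /= !mxE o0 o1.
by case: i => [[|[|i]] Hi] //=; ring.
Qed.
Lemma mulS_E (M : 'M[int]_2) i j :
  (S_mx *m M) i j = if i == 0 then - M 1 j else M 0 j.
Proof.
rewrite !mxE big_ord_recr big_ord_recr big_ord0 /= !mxE o0 o1.
by case: i => [[|[|i]] Hi] //=; ring.
Qed.
Lemma SS : S_mx *m S_mx = - 1%:M.
Proof.
apply/matrixP => i j; rewrite mulS_E !mxE.
case: i => [[|[|i]] Hi] //=; case: j => [[|[|j]] Hj] //=.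
Qed.

Definition st (w : seq bool) : int*int*int*int :=
  let M := word_mx w in (modz (M 0 0) 6, modz (M 0 1) 6, modz (M 1 0) 6, modz (M 1 1) 6).

Lemma st_cons l w : st (l :: w) = (if l then updU else updS) (st w).
Proof.
rewrite /st.
change (word_mx (l :: w)) with (letter_mx l *m word_mx w).
have e10 : (1 == 0 :> 'I_2) = false by [].
by case: l; rewrite /letter_mx /updU /updS ?mulU_E ?mulS_E eqxx e10 !modzNm ?modzDm.
Qed.

Lemma nbU_cons l w : nbU (l :: w) = (l + nbU w)%N.
Proof. by case: l. Qed.
Lemma nbS_cons l w : nbS (l :: w) = (~~ l + nbS w)%N.
Proof. by case: l. Qed.

Lemma upd6T s i j : upd6 (s, i, j) true = (updU s, ((i + 1) %% 3)%N, j).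
Proof. by []. Qed.
Lemma upd6F s i j : upd6 (s, i, j) false = (updS s, i, ((j + 1) %% 2)%N).
Proof. by []. Qed.

Lemma st_nil : st [::] = (Posz 1, Posz 0, Posz 0, Posz 1).
Proof. by rewrite /st /= !mxE. Qed.

Lemma st_reach w : (st w, (nbU w %% 3)%N, (nbS w %% 2)%N) \in reach.
Proof.
elim: w => [|l w IH]; first by rewrite st_nil; vm_compute.
have /allP /(_ _ IH) /andP [h1 h2] := reach_closed.
rewrite st_cons nbU_cons nbS_cons.
case: l h1 h2 => h1 h2.
  by move: h1; rewrite upd6T (addnC 1) modnDml.
by move: h2; rewrite upd6F (addnC 1) modnDml.
Qed.

Lemma trivial_div w : is_trivial w -> (3 %| nbU w)%N && (2 %| nbS w)%N.
Proof.
move=> tw.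
have /allP /(_ _ (st_reach w)) := reach_id.
have -> : (st w == (Posz 1, Posz 0, Posz 0, Posz 1)) || (st w == (Posz 5, Posz 0, Posz 0, Posz 5)).
  case/orP: tw => /eqP E; rewrite /st E !mxE.
    by apply/orP; left.
  by apply/orP; right.
by move=> /andP [/eqP h1 /eqP h2]; rewrite /dvdn h1 h2.
Qed.


Fixpoint words (N : nat) : seq (seq bool) :=
  if N is N'.+1 then [seq true :: w | w <- words N'] ++ [seq false :: w | w <- words N']
  else [:: [::]].

Lemma mem_words N w : (w \in words N) = (size w == N).
Proof.
elim: N w => [|N IH] w; first by case: w.
rewrite /= mem_cat; case: w => [|l w] /=.
  by apply/negbTE/norP; split; apply/negP=>/mapP[? _].
apply/idP/idP.
  by case/orP => /mapP [v]; rewrite IH => /eqP Hv [_ ->]; rewrite /= Hv.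
move=> /eqP [] E; case: l; apply/orP; [left|right]; apply/mapP; exists w => //; by rewrite IH E.
Qed.

Lemma uniq_words N : uniq (words N).
Proof.
elim: N => [|N IH] //=; rewrite cat_uniq.
have inj : forall b : bool, injective (cons b) by move=> b ? ? [].
rewrite !(map_inj_uniq (inj _)) IH /= andbT.
by apply/hasPn => w /mapP [v _ ->]; apply/negP => /mapP [? _].
Qed.

Lemma card_words N (p : pred (seq bool)) :
  #|[set t : N.-tuple bool | p t]| = count p (words N).
Proof.
rewrite cardsE cardE -deprecated_filter_index_enum size_filter.
rewrite -(count_map val p); apply/permP/uniq_perm.
- by rewrite (map_inj_uniq val_inj) index_enum_uniq.
- exact: uniq_words.
move=> w; rewrite mem_words; apply/mapP/idP.
  by move=> [t _ ->]; rewrite size_tuple.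
by move=> /eqP H; exists (Tuple (introT eqP H)); rewrite ?mem_index_enum.
Qed.


Definition cntN (R : pred (seq bool)) (P : pred 'M[int]_2) N u s : nat :=
  count (fun w => [&& nbU w == u, nbS w == s, R w & P (word_mx w)]) (words N).

Lemma eq_cntN R R' P P' N u s : R =1 R' -> P =1 P' -> cntN R P N u s = cntN R' P' N u s.
Proof. by move=> HR HP; apply: eq_count => w; rewrite HR HP. Qed.

Lemma nbUS w : (nbU w + nbS w)%N = size w.
Proof. elim: w => [|l w IH] //; rewrite nbU_cons nbS_cons /= -IH; case: l => /=; lia. Qed.

Lemma cntN_size R P N u s : N != (u + s)%N -> cntN R P N u s = 0%N.
Proof.
move=> H; apply/eqP; rewrite eqn0Ngt -has_count; apply/hasPn => w.
rewrite mem_words => /eqP Hw; apply/negP => /and4P [/eqP Hu /eqP Hs _ _].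
by move: H; rewrite -Hw -nbUS Hu Hs eqxx.
Qed.

Lemma cntN_0 R P u s : cntN R P 0 u s = [&& u == 0%N, s == 0%N, R [::] & P 1%:M] :> nat.
Proof. by rewrite /cntN /= addn0 eq_sym [s == _]eq_sym. Qed.

Lemma count_false (T : Type) (p : pred T) s : (forall x, p x = false) -> count p s = 0%N.
Proof. by move=> H; elim: s => [|x s IH] //=; rewrite H IH. Qed.

Lemma cntN_S R P N u s : cntN R P N.+1 u s =
  ((if u is u'.+1 then cntN (fun w => R (true :: w)) (fun M => P (U_mx *m M)) N u' s else 0)
  + (if s is s'.+1 then cntN (fun w => R (false :: w)) (fun M => P (S_mx *m M)) N u s' else 0))%N.
Proof.
rewrite /cntN /= count_cat !count_map; congr (_ + _).
  case: u => [|u]; last by apply: eq_count => w /=; rewrite add1n add0n eqSS.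
  by apply: count_false => w /=; rewrite ?add1n.
case: s => [|s]; last by apply: eq_count => w /=; rewrite add1n add0n eqSS.
by apply: count_false => w /=; rewrite ?add1n /= ?andbF.
Qed.

Definition cnt R P u s := cntN R P (u + s) u s.

Lemma cnt_rec R P u s : cnt R P u s =
  ((if u is u'.+1 then cnt (fun w => R (true :: w)) (fun M => P (U_mx *m M)) u' s else 0)
  + (if s is s'.+1 then cnt (fun w => R (false :: w)) (fun M => P (S_mx *m M)) u s' else 0)
  + [&& u == 0%N, s == 0%N, R [::] & P 1%:M])%N.
Proof.
rewrite /cnt; case: u => [|u]; case: s => [|s].
- by rewrite cntN_0.
- by rewrite add0n cntN_S /= !add0n addn0.
- by rewrite addn0 cntN_S /= !addn0.
rewrite addSn cntN_S /= addn0; congr (_ + _); by rewrite addSn addnS.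
Qed.

Lemma noSS_true w : noSS (true :: w) = noSS w.
Proof. by rewrite /noSS infix_consl. Qed.
Lemma noSS_false w : noSS (false :: w) = noSS w && head true w.
Proof. by rewrite /noSS infix_consl; case: w => [|[] w] //=; rewrite ?andbT ?andbF ?prefix0s. Qed.


Lemma smulE a b k : smul a b k = \sum_(0 <= i < k.+1) a i * b (k - i)%N.
Proof. by rewrite /smul big_mkord. Qed.

Lemma smulC a b : smul a b = smul b a.
Proof.
apply: functional_extensionality => k; rewrite /smul.
rewrite (reindex_inj rev_ord_inj); apply: eq_bigr => i _.
have Hi : (i <= k)%N by have := ltn_ord i.
by rewrite /= subSS subKn // mulrC.
Qed.

Lemma tri (F : nat -> nat -> int) k :
  \sum_(0 <= i < k.+1) \sum_(0 <= j < i.+1) F i j =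
  \sum_(0 <= j < k.+1) \sum_(0 <= l < (k - j).+1) F (l + j)%N j.
Proof.
rewrite (eq_big_nat _ _ (F2 := fun i => \sum_(0 <= j < k.+1 | (j < i.+1)%N) F i j)); last first.
  by move=> i /andP [_ Hi]; rewrite (@big_nat_widen _ _ _ 0 i.+1 k.+1).
rewrite (exchange_big_dep_nat (fun _ => true)) //=.
apply: eq_big_nat => j /andP [_ Hj].
rewrite (@big_cat_nat _ _ _ j 0 k.+1 _ _ (leq0n j) (ltnW Hj)) /=.
rewrite big_nat_cond big_pred0 ?add0r; last first.
  by move=> i /=; apply/negP => /andP [H1 H2]; lia.
rewrite -{1}(add0n j) big_addn subSn //.
by apply: eq_bigl => i; apply/idP; lia.
Qed.

Lemma smulA a b c : smul (smul a b) c = smul a (smul b c).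
Proof.
apply: functional_extensionality => k; rewrite !smulE.
under eq_big_nat => i _ do rewrite smulE mulr_suml.
rewrite (tri (fun i j => a j * b (i - j)%N * c (k - i)%N)).
apply: eq_big_nat => j /andP [_ Hj]; rewrite smulE mulr_sumr.
apply: eq_big_nat => l _; rewrite addnK mulrA; congr (_ * c _); lia.
Qed.

Definition E2 : nat -> int := fun k => if odd k then 0 else 1.
Definition shift (x : nat -> int) : nat -> int := fun k => if k is k'.+1 then x k' else 0.
Definition sadd (x y : nat -> int) : nat -> int := fun k => x k + y k.

Lemma smul1r x : smul x sone = x.
Proof.
apply: functional_extensionality => k; rewrite /smul big_ord_recr /= subnn /sone /= mulr1.
rewrite big1 ?add0r // => i _; rewrite subn_eq0 leqNgt ltn_ord /= mulr0 //.
Qed.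

Lemma smul_sadd x y h : smul (sadd x y) h = sadd (smul x h) (smul y h).
Proof.
apply: functional_extensionality => k; rewrite /smul /sadd -big_split /=.
by apply: eq_bigr => i _; rewrite mulrDl.
Qed.

Lemma smul_shift x h : smul (shift x) h = shift (smul x h).
Proof.
apply: functional_extensionality => k; rewrite /smul /shift.
case: k => [|k]; first by rewrite big_ord_recr big_ord0 /= mul0r add0r.
by rewrite big_ord_recl /= mul0r add0r; apply: eq_bigr => i _; rewrite /bump /= add1n subSS.
Qed.

Lemma smulE2_0 x : smul x E2 0 = x 0.
Proof. by rewrite /smul big_ord_recr big_ord0 /= add0r mulr1. Qed.
Lemma smulE2_1 x : smul x E2 1 = x 1.
Proof. by rewrite /smul !big_ord_recr big_ord0 /= add0r mulr0 add0r mulr1. Qed.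
Lemma smulE2_S x k : smul x E2 k.+2 = smul x E2 k + x k.+2.
Proof.
rewrite /smul big_ord_recr big_ord_recr /= subnn subSn // subnn /= mulr0 addr0 mulr1.
congr (_ + _); apply: eq_bigr => i _; rewrite /= /E2.
have Hi : (i <= k)%N by rewrite -ltnS ltn_ord.
by rewrite !subSn ?(leq_trans Hi) //= negbK.
Qed.

Lemma uniqE2 a c : a 0%N = c 0%N -> a 1%N = c 1%N ->
  (forall k, a k.+2 = a k + c k.+2) -> a = smul c E2.
Proof.
move=> h0 h1 hS; apply: functional_extensionality => k.
suff : a k = smul c E2 k /\ a k.+1 = smul c E2 k.+1 by case.
elim: k => [|k [IH1 IH2]]; first by rewrite smulE2_0 smulE2_1.
by split => //; rewrite hS smulE2_S IH1.
Qed.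

Lemma spowS x u : spow x u.+1 = smul (spow x u) x.
Proof. by rewrite /spow iterS -/(spow x u) smulC. Qed.

Lemma spowE2 u k : spow E2 u.+1 (2 * k)%N = ('C(u + k, k))%:Z /\ spow E2 u.+1 (2 * k).+1 = 0.
Proof.
elim: u k => [|u IH] k.
  rewrite spowS /spow /= smulC smul1r /E2 oddM /= add0n binn; split => //.
  by rewrite oddM.
rewrite spowS.
elim: k => [|k [IHk1 IHk2]].
  have [h1 h2] := IH 0%N; rewrite muln0 bin0 in h1 h2.
  by rewrite muln0 smulE2_0 smulE2_1 bin0 h1 h2.
have -> : (2 * k.+1 = (2 * k).+2)%N by lia.
rewrite !smulE2_S IHk1 IHk2 add0r.
have e : ((2 * k).+2 = 2 * k.+1)%N by lia.
rewrite e; have [-> ->] := IH k.+1; split => //.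
by rewrite -PoszD addnS addSn binS addnC !addnS addSn.
Qed.


Definition Ac P := cnt (fun _ => true) P.
Definition Ah P := cnt noSS P.
Definition Bh P := cnt (fun w => noSS w && head true w) P.
Definition Ser (f : nat -> nat) : nat -> int := fun s => (f s)%:Z.
Definition evenP (P : pred 'M[int]_2) := forall M, P (- M) = P M.
Definition PU (P : pred 'M[int]_2) : pred 'M[int]_2 := fun M => P (U_mx *m M).
Definition PS (P : pred 'M[int]_2) : pred 'M[int]_2 := fun M => P (S_mx *m M).

Lemma eq_cnt R R' P P' u s : R =1 R' -> P =1 P' -> cnt R P u s = cnt R' P' u s.
Proof. exact: eq_cntN. Qed.

Lemma evenU P : evenP P -> evenP (PU P).
Proof. by move=> h M; rewrite /PU mulmxN h. Qed.
Lemma evenS P : evenP P -> evenP (PS P).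
Proof. by move=> h M; rewrite /PS mulmxN h. Qed.
Lemma PSS P : evenP P -> PS (PS P) =1 P.
Proof. by move=> h M; rewrite /PS mulmxA SS mulNmx mul1mx h. Qed.

Lemma Ac_rec P u s : Ac P u s =
  ((if u is u'.+1 then Ac (PU P) u' s else 0) + (if s is s'.+1 then Ac (PS P) u s' else 0)
  + [&& u == 0%N, s == 0%N & P 1%:M])%N.
Proof. exact: cnt_rec. Qed.

Lemma Ah_rec P u s : Ah P u s =
  ((if u is u'.+1 then Ah (PU P) u' s else 0) + (if s is s'.+1 then Bh (PS P) u s' else 0)
  + [&& u == 0%N, s == 0%N & P 1%:M])%N.
Proof.
rewrite /Ah cnt_rec.
have eT Q a b : cnt (fun w => noSS (true :: w)) Q a b = cnt noSS Q a b.
  by apply: eq_cnt => // w; rewrite noSS_true.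
have eF Q a b : cnt (fun w => noSS (false :: w)) Q a b = Bh Q a b.
  by apply: eq_cnt => // w; rewrite noSS_false.
by case: u => [|u]; case: s => [|s]; rewrite ?eT ?eF.
Qed.

Lemma Bh_rec P u s : Bh P u s =
  ((if u is u'.+1 then Ah (PU P) u' s else 0) + [&& u == 0%N, s == 0%N & P 1%:M])%N.
Proof.
rewrite /Bh cnt_rec.
have eT Q a b : cnt (fun w => noSS (true :: w) && head true (true :: w)) Q a b = Ah Q a b.
  by apply: eq_cnt => // w; rewrite noSS_true andbT.
have eF Q a b : cnt (fun w => noSS (false :: w) && head true (false :: w)) Q a b = 0%N.
  by rewrite /cnt; apply: count_false => w; rewrite andbF !andbF.
by case: u => [|u]; case: s => [|s]; rewrite ?eT ?eF ?addn0.
Qed.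

Definition bb P u s : nat :=
  ((if u is u'.+1 then Ac (PU P) u' s else 0) + [&& u == 0%N, s == 0%N & P 1%:M])%N.

Lemma A_b P u s : Ac P u s = (bb P u s + (if s is s'.+1 then Ac (PS P) u s' else 0))%N.
Proof. by rewrite Ac_rec /bb addnAC. Qed.

Lemma step1 P u : evenP P ->
  Ser (Ac P u) = smul (sadd (Ser (bb P u)) (shift (Ser (bb (PS P) u)))) E2.
Proof.
move=> hP; apply: uniqE2.
- by rewrite /Ser /sadd /shift A_b addn0 addr0.
- by rewrite /Ser /sadd /shift (A_b P u 1) (A_b (PS P) u 0) addn0 PoszD.
move=> k; rewrite /Ser /sadd /shift (A_b P u k.+2) (A_b (PS P) u k.+1).
rewrite /Ac (@eq_cnt _ _ _ _ u k (frefl _) (PSS P hP)) -/(Ac P u k) !PoszD.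
ring.
Qed.

Lemma step3 P u : sadd (Ser (Bh P u)) (shift (Ser (Bh (PS P) u))) = Ser (Ah P u).
Proof.
apply: functional_extensionality => s; rewrite /sadd /shift /Ser Ah_rec Bh_rec.
by case: s => [|s]; rewrite ?addr0 -?PoszD; congr Posz; lia.
Qed.

Theorem core u : forall P, evenP P ->
  Ser (Ac P u) = smul (smul (Ser (Ah P u)) (spow E2 u)) E2.
Proof.
elim: u => [|u IH] P hP.
  rewrite (step1 P 0%N hP) -step3.
  have h Q : Ser (bb Q 0) = Ser (Bh Q 0).
    by apply: functional_extensionality => s; rewrite /Ser /bb Bh_rec.
  by rewrite !h /spow /= smul1r.
rewrite (step1 P u.+1 hP) -step3.
have h Q : evenP Q -> Ser (bb Q u.+1) = smul (Ser (Bh Q u.+1)) (spow E2 u.+1).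
  move=> hQ; have -> : Ser (Bh Q u.+1) = Ser (Ah (PU Q) u).
    by apply: functional_extensionality => s; rewrite /Ser Bh_rec addn0.
  have -> : Ser (bb Q u.+1) = Ser (Ac (PU Q) u).
    by apply: functional_extensionality => s; rewrite /Ser /bb addn0.
  by rewrite IH; [rewrite spowS smulA | exact: evenU].
rewrite (h P hP) (h (PS P) (evenS P hP)).
by rewrite -smul_shift -smul_sadd.
Qed.


Definition triv : pred 'M[int]_2 := fun M => (M == 1%:M) || (M == - 1%:M).

Lemma even_triv : evenP triv.
Proof. by move=> M; rewrite /triv eqr_oppLR eqr_opp orbC. Qed.

Lemma q_Ac u s : q u s = Ac triv u s.
Proof.
rewrite /q (card_words _ (fun w => [&& nbU w == u, nbS w == s & is_trivial w])).
by apply: eq_count => w.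
Qed.

Lemma qhat_Ah u s : qhat u s = Ah triv u s.
Proof.
rewrite /qhat (card_words _ (fun w => [&& nbU w == u, nbS w == s, is_trivial w & noSS w])).
apply: eq_count => w /=; congr (_ && (_ && _)); by rewrite andbC.
Qed.

Lemma q_zero u s : ~~ ((3 %| u)%N && (2 %| s)%N) -> q u s = 0%N.
Proof.
move=> H; rewrite /q (card_words _ (fun w => [&& nbU w == u, nbS w == s & is_trivial w])).
apply: count_false => w; apply/negP => /and3P [/eqP hu /eqP hs /trivial_div].
by rewrite hu hs; exact: (negP H).
Qed.

Lemma qhat_zero u s : ~~ ((3 %| u)%N && (2 %| s)%N) -> qhat u s = 0%N.
Proof.
move=> H; rewrite /qhat (card_words _ (fun w => [&& nbU w == u, nbS w == s, is_trivial w & noSS w])).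
apply: count_false => w; apply/negP => /and4P [/eqP hu /eqP hs /trivial_div].
by rewrite hu hs => h _; exact: (negP H h).
Qed.

Lemma main_ser u : Ser (q u) = smul (smul (Ser (qhat u)) (spow E2 u)) E2.
Proof.
have -> : Ser (q u) = Ser (Ac triv u).
  by apply: functional_extensionality => s; rewrite /Ser q_Ac.
have -> : Ser (qhat u) = Ser (Ah triv u).
  by apply: functional_extensionality => s; rewrite /Ser qhat_Ah.
exact: core even_triv.
Qed.

Lemma sum_even (f : nat -> int) m : (forall k, f (2 * k).+1 = 0) ->
  \sum_(i < (2 * m).+1) f i = \sum_(k < m.+1) f (2 * k)%N.
Proof.
move=> h; elim: m => [|m IH]; first by rewrite !big_ord_recr !big_ord0.
have -> : (2 * m.+1).+1 = ((2 * m).+1).+2 by lia.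
rewrite big_ord_recr big_ord_recr /= IH [in RHS]big_ord_recr /= h addr0.
by have -> : (2 * m).+2 = (2 * m.+1)%N by lia.
Qed.

Lemma Posz_sum n (F : nat -> nat) : Posz (\sum_(k < n) F k) = \sum_(k < n) Posz (F k).
Proof. by elim: n => [|n IH]; rewrite ?big_ord0 // !big_ord_recr PoszD IH. Qed.

Lemma part1 n m : q (3 * n) (2 * m) =
      (\sum_(k < m.+1) qhat (3 * n) (2 * m - 2 * k) * 'C(3 * n + k, k))%N.
Proof.
have H := f_equal (fun f => f (2 * m)%N) (main_ser (3 * n)).
rewrite /= smulA -spowS smulC /smul in H.
rewrite /Ser in H.
rewrite (sum_even (fun i => spow E2 (3 * n).+1 i * Posz (qhat (3 * n) (2 * m - i)%N))) in H; last first.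
  by move=> k; have [_ ->] := spowE2 (3 * n) k; rewrite mul0r.
suff : Posz (q (3 * n) (2 * m)) = Posz (\sum_(k < m.+1) qhat (3 * n) (2 * m - 2 * k) * 'C(3 * n + k, k))%N by case.
rewrite H -natz natr_sum; apply: eq_bigr => k _.
by have [-> _] := spowE2 (3 * n) k; rewrite natz PoszM mulrC.
Qed.

Lemma smul_omy0 J : smul J one_minus_y2 0 = J 0%N.
Proof. by rewrite /smul big_ord_recr big_ord0 /= add0r mulr1. Qed.
Lemma smul_omy1 J : smul J one_minus_y2 1 = J 1%N.
Proof. by rewrite /smul !big_ord_recr big_ord0 /= add0r mulr0 add0r mulr1. Qed.
Lemma smul_omyS J k : smul J one_minus_y2 k.+2 = J k.+2 - J k.
Proof.
rewrite /smul !big_ord_recr /=.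
have e1 : (k.+2 - k = 2)%N by lia.
have e2 : (k.+2 - k.+1 = 1)%N by lia.
rewrite e1 e2 subnn.
rewrite big1 ?add0r; last first.
  move=> i _; rewrite /one_minus_y2.
  have Hi : (i < k)%N by [].
  have -> : (k.+2 - i = (k - i).-1.+3)%N by lia.
  by rewrite /= mulr0.
by rewrite /one_minus_y2 /= mulr0 addr0 mulr1 mulrN1 addrC.
Qed.

Lemma J_E2 J : smul J one_minus_y2 = sone -> J = E2.
Proof.
move=> HJ; apply: functional_extensionality => k.
have h0 : J 0%N = 1 by rewrite -smul_omy0 HJ.
have h1 : J 1%N = 0 by rewrite -smul_omy1 HJ.
have hS k' : J k'.+2 = J k' by apply/eqP; rewrite -subr_eq0 -smul_omyS HJ.
suff : J k = E2 k /\ J k.+1 = E2 k.+1 by case.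
elim: k => [|k [IH1 IH2]]; first by rewrite h0 h1.
by split => //; rewrite hS IH1 /E2 /= negbK.
Qed.

Lemma smul0 h : smul (fun _ => 0) h = (fun _ => 0).
Proof. by apply: functional_extensionality => k; rewrite /smul big1 // => i _; rewrite mul0r. Qed.

Lemma part2 J : smul J one_minus_y2 = sone -> Qser = subst_mul Qhatser J.
Proof.
move=> /J_E2 ->; apply: functional_extensionality => a; apply: functional_extensionality => b.
rewrite /Qser /subst_mul.
case: (boolP (3 %| a)%N) => ha.
  have -> : Qhatser a = Ser (qhat a).
    apply: functional_extensionality => s; rewrite /Qhatser /Ser ha /=.
    by case: (boolP (2 %| s)%N) => hs //; rewrite qhat_zero // ha.
  by rewrite -main_ser.
have -> : Qhatser a = (fun _ => 0).
  by apply: functional_extensionality => s; rewrite /Qhatser (negbTE ha).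
by rewrite !smul0 q_zero // (negbTE ha).
Qed.

Theorem proposition2 :
  (forall n m : nat,
      q (3 * n) (2 * m) =
      (\sum_(k < m.+1) qhat (3 * n) (2 * m - 2 * k) * 'C(3 * n + k, k))%N)
  /\
  (forall J : nat -> int, smul J one_minus_y2 = sone ->
      Qser = subst_mul Qhatser J).
Proof. split; [exact: part1 | exact: part2]. Qed.
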